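(* Let $\mathbf{s}=(s_1,\ldots,s_r)$ and $\mathbf{t}=(t_1,\ldots,t_r)$ be $r$-tuples of positive integers such that $s_1+\cdots+s_r\ge t_1+\cdots+t_r$ and there is an index $l$ with $0\le l\le r-1$ such that $s_i\le t_i$ for $1\le i\le l$ and $s_i\ge t_i$ for $l+1\le i\le r$. Then for every positive integer $n$, $H_n(s_1,\ldots,s_r)\le H_n(t_1,\ldots,t_r)$. In particular this holds whenever $s_i\ge t_i$ for all $i$.
   Context: $H_n(s_1,\ldots,s_r)=\sum_{1\le k_1<k_2<\cdots<k_r\le n}\frac{1}{k_1^{s_1}\cdots k_r^{s_r}}$ (an empty sum, equal to $0$, if $n<r$). *)

(* Defs.v *)
From mathcomp Require Import all_boot all_order all_algebra.
Set Implicit Arguments. Unset Strict Implicit. Unset Printing Implicit Defensive.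
Import Order.TTheory GRing.Theory Num.Theory.
Local Open Scope ring_scope.

(* Multiple harmonic sum H_n(s_1,...,s_r), with the r-tuple s given as
   s : 'I_r -> nat (index i : 'I_r stands for s_{i+1}). *)
Definition H (n r : nat) (s : 'I_r -> nat) : rat :=
  \sum_(k : {ffun 'I_r -> 'I_n.+1} |
          [forall i : 'I_r, (0 < k i)%N] &&
          [forall i : 'I_r, forall j : 'I_r, (i < j)%N ==> (k i < k j)%N])
     \prod_(i < r) ((k i)%:R ^+ (s i))^-1.

(* Main.v *)
Require Import Defs.
From mathcomp Require Import all_boot all_order all_algebra.
Import Order.TTheory GRing.Theory Num.Theory.
Local Open Scope ring_scope.

Lemma expr_mono (a b e : nat) : (a <= b)%N -> (a ^ e <= b ^ e)%N.
Proof. by move=> h; case: e => [//|e]; rewrite leq_exp2r. Qed.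

Lemma term_low (a m s t : nat) : (a <= m)%N -> (s <= t)%N ->
  (a ^ t * m ^ s <= a ^ s * m ^ t)%N.
Proof.
move=> am st; rewrite -(subnKC st) !expnD mulnAC -!mulnA leq_mul2l.
by rewrite leq_mul2l expr_mono ?orbT.
Qed.

Lemma term_high (a m s t : nat) : (m <= a)%N -> (t <= s)%N ->
  (a ^ t * m ^ s <= a ^ s * m ^ t)%N.
Proof.
move=> am st; rewrite -(subnKC st) !expnD -!mulnA leq_mul2l.
by rewrite [X in (_ <= X)%N]mulnC leq_mul2l expr_mono ?orbT.
Qed.

Theorem lemma2 (r : nat) (s t : 'I_r -> nat)
    (hs : forall i, (0 < s i)%N) (ht : forall i, (0 < t i)%N)
    (hsum : (\sum_(i < r) t i <= \sum_(i < r) s i)%N)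
    (l : nat) (hl : (l <= r.-1)%N)
    (hlow : forall i : 'I_r, (i < l)%N -> (s i <= t i)%N)
    (hhigh : forall i : 'I_r, (l <= i)%N -> (t i <= s i)%N)
    (n : nat) (hn : (0 < n)%N) :
  H n s <= H n t.
Proof.
rewrite /H; apply: ler_sum => k /andP[/forallP kpos /forallP kinc].
case: r s t hs ht hsum hl hlow hhigh k kpos kinc => [|r] s t hs ht hsum hl hlow hhigh k kpos kinc.
  by rewrite !big_ord0.
have lr : (l < r.+1)%N by rewrite ltnS.
set m := nat_of_ord (k (Ordinal lr)).
have m0 : (0 < m)%N by apply: kpos.
have key : (\prod_(i < r.+1) (k i) ^ t i <= \prod_(i < r.+1) (k i) ^ s i)%N.
  have h1 : (\prod_(i < r.+1) ((k i) ^ t i * m ^ s i)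
             <= \prod_(i < r.+1) ((k i) ^ s i * m ^ t i))%N.
    apply: leq_prod => i _.
    case: (ltnP i l) => il.
      apply: term_low; last exact: hlow.
      have := kinc i => /forallP /(_ (Ordinal lr)) /implyP /(_ il) /ltnW.
      done.
    apply: term_high; last exact: hhigh.
    rewrite leq_eqVlt in il; case/orP: il => [/eqP li|li].
      by rewrite /m; have -> : Ordinal lr = i by apply: val_inj.
    by have := kinc (Ordinal lr) => /forallP /(_ i) /implyP /(_ li) /ltnW.
  rewrite !big_split /= -!expn_sum in h1.
  have h2 : (m ^ (\sum_(i < r.+1) t i) <= m ^ (\sum_(i < r.+1) s i))%N
    by apply: leq_pexp2l.
  have hp : (0 < m ^ (\sum_(i < r.+1) s i))%N by rewrite expn_gt0 m0.
  rewrite -(leq_pmul2r hp); apply: (leq_trans h1).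
  by rewrite leq_mul2l h2 orbT.
rewrite !prodfV; rewrite lef_pV2 ?posrE; first last.
- by apply: prodr_gt0 => i _; rewrite exprn_gt0 // ltr0n kpos.
- by apply: prodr_gt0 => i _; rewrite exprn_gt0 // ltr0n kpos.
have E : forall u : 'I_r.+1 -> nat,
  \prod_(i < r.+1) ((k i)%:R ^+ u i : rat) = (\prod_(i < r.+1) (k i) ^ u i)%N%:R.
  by move=> u; rewrite natr_prod; apply: eq_bigr => i _; rewrite natrX.
by rewrite !E ler_nat.
Qed.
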